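(* Let $\langle E,\rightarrow\rangle$ be a computation and $b$ a predicate. The slice of $\langle E,\rightarrow\rangle$ with respect to $b$ is lean if and only if $b$ is regular (with respect to $\langle E,\rightarrow\rangle$).
   Context: A directed graph's consistent cuts are the vertex subsets $C$ such that for every edge $(u,v)$, $v\in C$ implies $u\in C$. A computation is a directed graph $\langle E, \rightarrow\rangle$ whose vertices (events) are partitioned among processes $p_1,\dots,p_n$, the events of each process totally ordered, each process $p_i$ having an initial event $\bot_i$ (first) and a final event $\top_i$ (last), whose path relation contains Lamport's happened-before relation, and in which all initial events lie in one strongly connected component and all final events lie in one strongly connected component. $\emptyset$ and $E$ are the trivial consistent cuts; a predicate is a boolean function of process variables evaluated on non-trivial consistent cuts (using variable values after all events of the cut are executed). A predicate $b$ is regular if whenever consistent cuts $C_1,C_2$ satisfy $b$, so do $C_1\cap C_2$ and $C_1\cup C_2$. The slice of $\langle E,\rightarrow\rangle$ with respect to $b$ is a directed graph with vertex set $E$ whose set of consistent cuts contains every consistent cut of $\langle E,\rightarrow\rangle$ satisfying $b$ and which has the least number of consistent cuts among all such directed graphs (it is determined up to having the same set of consistent cuts). The slice is lean if every non-trivial consistent cut of the slice satisfies $b$. *)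

(* Defs.v *)
From Stdlib Require Import Relations.
From mathcomp Require Import all_boot.
Set Implicit Arguments. Unset Strict Implicit. Unset Printing Implicit Defensive.

Definition consistent (E : finType) (g : rel E) (C : {set E}) : bool :=
  [forall u, forall v, g u v ==> (v \in C) ==> (u \in C)].

Definition cuts (E : finType) (g : rel E) : {set {set E}} :=
  [set C | consistent g C].

Definition happened_before (E : finType) (po msg : rel E) : E -> E -> Prop :=
  clos_trans E (fun e f => po e f \/ msg e f).

(* <E, g> is a computation with n processes:
   proc e = process of event e, po = (strict) process order,
   msg = message (send -> receive) relation,
   bot i / top i = initial / final event of process p_i. *)
Definition is_computation (E : finType) (g : rel E) (n : nat)
    (proc : E -> 'I_n) (po msg : rel E) (bot top : 'I_n -> E) : Prop :=
  (forall e f, po e f -> proc e = proc f) /\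
      (forall e, ~~ po e e) /\
      (forall e f h, po e f -> po f h -> po e h) /\
      (forall e f, proc e = proc f -> e <> f -> po e f \/ po f e) /\
      (forall i, proc (bot i) = i /\ proc (top i) = i /\ bot i <> top i) /\
      (forall i e, proc e = i -> e <> bot i -> po (bot i) e) /\
      (forall i e, proc e = i -> e <> top i -> po e (top i)) /\
      (forall e f, happened_before po msg e f -> connect g e f) /\
      (forall i j, connect g (bot i) (bot j)) /\
      (forall i j, connect g (top i) (top j)).

(* A predicate b (a boolean function of the global state at a cut) is
   modelled as an arbitrary boolean function of cuts; it is only evaluated on
   non-trivial consistent cuts of the computation g. *)
Definition satisfies (E : finType) (g : rel E) (b : {set E} -> bool)
    (C : {set E}) : bool :=
  [&& consistent g C, C != set0, C != setT & b C].

Definition regular (E : finType) (g : rel E) (b : {set E} -> bool) : Prop :=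
  forall C1 C2, satisfies g b C1 -> satisfies g b C2 ->
    satisfies g b (C1 :&: C2) /\ satisfies g b (C1 :|: C2).

Definition is_slice (E : finType) (g : rel E) (b : {set E} -> bool)
    (S : rel E) : Prop :=
  (forall C, satisfies g b C -> consistent S C) /\
  (forall S' : rel E, (forall C, satisfies g b C -> consistent S' C) ->
     #|cuts S| <= #|cuts S'|).

Definition lean (E : finType) (g : rel E) (b : {set E} -> bool)
    (S : rel E) : Prop :=
  forall C, consistent S C -> C != set0 -> C != setT -> satisfies g b C.

(* Main.v *)
Require Import Defs.
From mathcomp Require Import all_boot.
From Stdlib Require Import Relations.

Set Implicit Arguments. Unset Strict Implicit.

Lemma consistentP (E : finType) (g : rel E) (C : {set E}) :
  reflect (forall u v, g u v -> v \in C -> u \in C) (consistent g C).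
Proof.
apply: (iffP forallP) => [H u v guv vC | H u].
  by have /forallP/(_ v)/implyP/(_ guv)/implyP/(_ vC) := H u.
by apply/forallP => v; apply/implyP => guv; apply/implyP; apply: H.
Qed.

Lemma consistentI (E : finType) (g : rel E) (A B : {set E}) :
  consistent g A -> consistent g B -> consistent g (A :&: B).
Proof.
move=> /consistentP hA /consistentP hB; apply/consistentP => u v guv.
by rewrite !inE => /andP[vA vB]; rewrite (hA _ _ guv vA) (hB _ _ guv vB).
Qed.

Lemma consistentU (E : finType) (g : rel E) (A B : {set E}) :
  consistent g A -> consistent g B -> consistent g (A :|: B).
Proof.
move=> /consistentP hA /consistentP hB; apply/consistentP => u v guv.
by rewrite !inE => /orP[vA|vB]; [rewrite (hA _ _ guv vA) | rewrite (hB _ _ guv vB) orbT].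
Qed.

Lemma consistent0 (E : finType) (g : rel E) : consistent g set0.
Proof. by apply/consistentP => u v _; rewrite inE. Qed.

Lemma consistentT (E : finType) (g : rel E) : consistent g setT.
Proof. by apply/consistentP => u v _; rewrite !inE. Qed.

Lemma consistent_connect (E : finType) (g : rel E) (C : {set E}) x y :
  consistent g C -> connect g x y -> y \in C -> x \in C.
Proof.
move=> /consistentP hC /connectP[p pth ->]; elim: p x pth => [|z p IH] x //=.
by case/andP=> gxz pz yC; apply: (hC _ _ gxz); apply: IH.
Qed.

Theorem theorem5 (E : finType) (g : rel E) (n : nat) (proc : E -> 'I_n)
    (po msg : rel E) (bot top : 'I_n -> E) (b : {set E} -> bool) (S : rel E) :
  is_computation g proc po msg bot top ->
  is_slice g b S ->
  (lean g b S <-> regular g b).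
Proof.
move=> [_ [_ [_ [_ [_ [Hbot [Htop [Hhb [Hbb Htt]]]]]]]]] [Hsl Hmin].
have po_conn : forall e f, po e f -> connect g e f.
  by move=> e f pef; apply: Hhb; apply: t_step; left.
split.
- move=> Hlean.
  have allbot : forall C, satisfies g b C -> forall j, bot j \in C.
    move=> C; rewrite /satisfies => /and4P[cC /set0Pn[e eC] _ _] j.
    apply: (consistent_connect cC (Hbb j (proc e))).
    apply: (consistent_connect cC _ eC).
    case: (eqVneq e (bot (proc e))) => [<-|ne]; first exact: connect0.
    by apply: po_conn; apply: (Hbot _ _ erefl); apply/eqP.
  have alltop : forall C, satisfies g b C -> forall j, top j \notin C.
    move=> C; rewrite /satisfies => /and4P[cC _ nT _] j.
    have [x xC] : exists x, x \notin C.
      case: (pickP (fun x => x \notin C)) => [x hx|hn]; first by exists x.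
      by move: nT; case/eqP; apply/setP => x; rewrite inE; move: (hn x) => /negbFE.
    apply/negP => tjC; move/negP: xC; apply.
    apply: (consistent_connect cC _ (consistent_connect cC (Htt (proc x) j) tjC)).
    case: (eqVneq x (top (proc x))) => [<-|ne]; first exact: connect0.
    by apply: po_conn; apply: (Htop _ _ erefl); apply/eqP.
  move=> C1 C2 s1 s2.
  have c1 := Hsl _ s1; have c2 := Hsl _ s2.
  move: (s1); rewrite /satisfies => /and4P[_ /set0Pn[e eC1] nT1 _].
  split; apply: Hlean.
  + exact: consistentI.
  + by apply/set0Pn; exists (bot (proc e)); rewrite inE !allbot.
  + apply/negP => /eqP h.
    have : top (proc e) \in C1 :&: C2 by rewrite h inE.
    by rewrite inE (negbTE (alltop _ s1 _)).
  + exact: consistentU.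
  + by apply/set0Pn; exists e; rewrite inE eC1.
  + apply/negP => /eqP h.
    have : top (proc e) \in C1 :|: C2 by rewrite h inE.
    by rewrite inE (negbTE (alltop _ s1 _)) (negbTE (alltop _ s2 _)).
- move=> Hreg.
  pose F : {set {set E}} :=
    [set C | [|| satisfies g b C, C == set0 | C == setT]].
  have FI : forall A B, A \in F -> B \in F -> A :&: B \in F.
    move=> A B; rewrite !inE => /or3P[sA|/eqP->|/eqP->] /or3P[sB|/eqP->|/eqP->];
      rewrite ?set0I ?setI0 ?setTI ?setIT ?eqxx ?orbT ?sA ?sB //.
    by rewrite (Hreg _ _ sA sB).1.
  have FU : forall A B, A \in F -> B \in F -> A :|: B \in F.
    move=> A B; rewrite !inE => /or3P[sA|/eqP->|/eqP->] /or3P[sB|/eqP->|/eqP->];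
      rewrite ?set0U ?setU0 ?setTU ?setUT ?eqxx ?orbT ?sA ?sB //.
    by rewrite (Hreg _ _ sA sB).2.
  have F0 : set0 \in F by rewrite inE eqxx orbT.
  have FT : setT \in F by rewrite inE eqxx !orbT.
  pose S' : rel E := fun u v => [forall C in F, (v \in C) ==> (u \in C)].
  have cutsS' : cuts S' = F.
    apply/setP => C; rewrite inE; apply/idP/idP; last first.
      move=> CF; apply/consistentP => u v /forallP/(_ C).
      by rewrite CF /= => /implyP.
    move=> /consistentP cC.
    pose D v := \bigcap_(C' in F | v \in C') C'.
    have DF : forall v, D v \in F.
      move=> v; apply: (big_ind (fun X => X \in F)) => //.
      by move=> C' /andP[].
    have -> : C = \bigcup_(v in C) D v.
      apply/setP => x; apply/idP/bigcupP => [xC | [v vC xD]].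
        exists x => //; apply/bigcapP => C' /andP[].
        by [].
      apply: (cC x v) => //; apply/forallP => C'; apply/implyP => C'F.
      apply/implyP => vC'; by move/bigcapP: xD; apply; rewrite C'F.
    by apply: (big_ind (fun X => X \in F)).
  have FS : F \subset cuts S.
    apply/subsetP => C; rewrite !inE => /or3P[sC|/eqP->|/eqP->].
    + exact: Hsl.
    + exact: consistent0.
    + exact: consistentT.
  have eqF : F == cuts S.
    rewrite eqEcard FS /= -cutsS'; apply: Hmin => C sC.
    have : C \in cuts S' by rewrite cutsS' inE sC.
    by rewrite inE.
  move=> C cC n0 nT.
  have : C \in F by rewrite (eqP eqF) inE.
  by rewrite inE (negbTE n0) (negbTE nT) !orbF.
Qed.
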